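(* The convex Vietoris functor $\mathbb{V}^{\mathrm{c}}\colon\mathbf{CompOrd}\to\mathbf{CompOrd}$ preserves coreflexive equalizers: if $f,g\colon X\to Y$ are morphisms in $\mathbf{CompOrd}$ with a common retraction $k\colon Y\to X$ ($k\circ f=k\circ g=1_X$) and $h\colon E\to X$ is an equalizer of $f,g$ in $\mathbf{CompOrd}$, then $\mathbb{V}^{\mathrm{c}}h$ is an equalizer of $\mathbb{V}^{\mathrm{c}}f$ and $\mathbb{V}^{\mathrm{c}}g$ in $\mathbf{CompOrd}$.
   Context: $\mathbf{CompOrd}$ is the category of compact ordered spaces (compact Hausdorff spaces with a partial order closed in $X\times X$) and continuous order-preserving maps. For a subset $Y$ of a poset, $\uparrow Y$, $\downarrow Y$ are up- and down-closure; $Y$ is convex if $y_1\le x\le y_2$ with $y_1,y_2\in Y$ implies $x\in Y$; $\updownarrow Y=\uparrow Y\cap\downarrow Y$. $\mathbb{V}^{\mathrm{c}}X$ is the set of closed convex subsets of $X$ (including $\varnothing$) with the topology generated by $\Diamond U=\{K\mid K\cap U\neq\varnothing\}$ and $\Box U=\{K\mid K\subseteq U\}$ ($U$ open upset or open downset of $X$) and the Egli–Milner order $K\le_{\mathrm{EM}}L$ iff $\uparrow L\subseteq\uparrow K$ and $\downarrow K\subseteq\downarrow L$; it is a compact ordered space, and $\mathbb{V}^{\mathrm{c}}f(K)=\updownarrow f[K]$ defines an endofunctor. *)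

(* Defs.v *)
From HB Require Import structures.
From mathcomp Require Import all_boot all_order.
From mathcomp Require Import all_classical.
From mathcomp Require Import topology.


Local Open Scope classical_set_scope.

Section order_notions.
Context {T : Type} (le : T -> T -> Prop).

Definition upc (A : set T) : set T := [set y | exists2 x, A x & le x y].
Definition downc (A : set T) : set T := [set y | exists2 x, A x & le y x].
Definition updownc (A : set T) : set T := upc A `&` downc A.

Definition is_upset (A : set T) := forall x y, A x -> le x y -> A y.
Definition is_downset (A : set T) := forall x y, A x -> le y x -> A y.

Definition order_convex (A : set T) :=
  forall y1 x y2, A y1 -> A y2 -> le y1 x -> le x y2 -> A x.

Definition is_partial_order :=
  [/\ forall x, le x x,
      forall x y z, le x y -> le y z -> le x z &
      forall x y, le x y -> le y x -> x = y].
End order_notions.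

Definition compord {X : topologicalType} (le : X -> X -> Prop) :=
  [/\ compact [set: X], hausdorff_space X, is_partial_order le &
      closed [set p : X * X | le p.1 p.2]].

Definition compord_hom {X Y : topologicalType}
  (leX : X -> X -> Prop) (leY : Y -> Y -> Prop) (f : X -> Y) :=
  continuous f /\ forall x y, leX x y -> leY (f x) (f y).

Definition is_equalizer {E X Y : topologicalType}
  (leE : E -> E -> Prop) (leX : X -> X -> Prop) (leY : Y -> Y -> Prop)
  (h : E -> X) (f g : X -> Y) :=
  [/\ compord leE /\ compord leX /\ compord leY,
      compord_hom leE leX h /\ compord_hom leX leY f /\ compord_hom leX leY g,
      f \o h = g \o h &
      forall (Z : topologicalType) (leZ : Z -> Z -> Prop), compord leZ ->
        forall u : Z -> X, compord_hom leZ leX u -> f \o u = g \o u ->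
          exists! v : Z -> E, compord_hom leZ leE v /\ h \o v = u].

Definition VC (X : topologicalType) (le : X -> X -> Prop) : Type :=
  {K : set X | closed K /\ order_convex le K}.

HB.instance Definition _ {X : topologicalType} (le : X -> X -> Prop) :=
  gen_eqMixin (@VC X le).
HB.instance Definition _ {X : topologicalType} (le : X -> X -> Prop) :=
  gen_choiceMixin (@VC X le).

Definition vc_diamond {X : topologicalType} (le : X -> X -> Prop)
  (U : set X) : set (VC X le) := [set K | (proj1_sig K `&` U) !=set0].
Definition vc_box {X : topologicalType} (le : X -> X -> Prop)
  (U : set X) : set (VC X le) := [set K | proj1_sig K `<=` U].

Definition vc_subbase_index {X : topologicalType} (le : X -> X -> Prop) :
  set (bool * set X) :=
  [set p | open p.2 /\ (is_upset le p.2 \/ is_downset le p.2)].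

Definition vc_subbase {X : topologicalType} (le : X -> X -> Prop)
  (p : bool * set X) : set (VC X le) :=
  if p.1 then vc_diamond le p.2 else vc_box le p.2.

HB.instance Definition _ {X : topologicalType} (le : X -> X -> Prop) :=
  @isSubBaseTopological.Build (@VC X le) (bool * set X)%type
    (vc_subbase_index le) (vc_subbase le).

Definition vc_le {X : topologicalType} (le : X -> X -> Prop)
  (K L : VC X le) : Prop :=
  upc le (proj1_sig L) `<=` upc le (proj1_sig K) /\
  downc le (proj1_sig K) `<=` downc le (proj1_sig L).

Lemma vc_empty_prop {X : topologicalType} (le : X -> X -> Prop) :
  closed (@set0 X) /\ order_convex le (@set0 X).
Proof. by split; [exact: closed0 | move=> ? ? ? []]. Qed.

Definition vc_empty {X : topologicalType} (le : X -> X -> Prop) : VC X le :=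
  exist _ set0 (vc_empty_prop le).

(* V^c f (K) = updown (f[K]).  For a morphism between compact ordered
   spaces this set is always closed and convex; the default branch
   (empty set) is never used in that situation. *)
Definition vc_map {X Y : topologicalType} (leX : X -> X -> Prop)
  (leY : Y -> Y -> Prop) (f : X -> Y) (K : VC X leX) : VC Y leY :=
  let S := updownc leY (f @` proj1_sig K) in
  match pselect (closed S /\ order_convex leY S) with
  | left p => exist _ S p
  | right _ => vc_empty leY
  end.

(* Main.v *)
Require Import Defs.
From HB Require Import structures.
From mathcomp Require Import all_boot all_order.
From mathcomp Require Import all_classical.
From mathcomp Require Import topology unstable.
Local Open Scope classical_set_scope.

Section Tube.
Context {T U : topologicalType}.

Lemma tube_point (x : T) (Q : set U) (S : set (T * U)) :
  compact Q -> open S -> (forall b, Q b -> S (x, b)) ->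
  exists2 A, nbhs x A & set_nbhs Q [set b | forall a, A a -> S (a, b)].
Proof.
move=> /compact_near_coveringP cQ oS QS.
have := cQ (set T) (powerset_filter_from (nbhs x))
  (fun A b => nbhs b [set b' | forall a, A a -> S (a, b')]) _.
case.
- move=> b Qb.
  have : nbhs (x, b) S by apply: open_nbhs_nbhs; split => //; exact: QS.
  case=> -[A0 B0] [/= A0x B0b] A0B0S.
  have [B1 [[oB1 B1b] B1B0]] : exists B1, open_nbhs b B1 /\ B1 `<=` B0.
    by move: B0b; rewrite nbhsE => -[B1 ? ?]; exists B1.
  exists (B1, [set A | nbhs x A /\ A `<=` A0]).
    split => /=; first exact: open_nbhs_nbhs.
    exact: powerset_filter_fromP.
  case=> b'' A /= [B1b'' [_ AA0]].
  apply: filterS (open_nbhs_nbhs (conj oB1 B1b'')) => b' B1b' a Aa.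
  by apply: A0B0S; split; [exact: AA0 | exact: B1B0].
- move=> M [FM _ [A MA]] MQ.
  exists A; first exact: FM.
  by move=> b Qb; exact: (MQ _ MA _ Qb).
Qed.

Lemma tube (P : set T) (Q : set U) (S : set (T * U)) :
  compact P -> compact Q -> open S -> P `*` Q `<=` S ->
  exists A B, [/\ open A, open B, P `<=` A, Q `<=` B &
    forall a b, A a -> B b -> S (a, b)].
Proof.
move=> cP cQ oS PQS.
have [->|/set0P [q0 Qq0]] := eqVneq Q set0.
  by exists setT, set0; split => //; [exact: openT|exact: open0].
have PF : ProperFilter (set_nbhs Q) by apply: set_nbhs_pfilter; exists q0.
move/compact_near_coveringP : cP => cP.
have := cP (set U) (powerset_filter_from (set_nbhs Q))
  (fun B a => nbhs a [set a' | forall b, B b -> S (a', b)]) _.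
case.
- move=> x Px.
  have [A Ax QB] := @tube_point x Q S cQ oS (fun b Qb => PQS (x, b) (conj Px Qb)).
  have [A1 [[oA1 A1x] A1A]] : exists A1, open_nbhs x A1 /\ A1 `<=` A.
    by move: Ax; rewrite nbhsE => -[A1 ? ?]; exists A1.
  exists (A1, [set B | set_nbhs Q B /\ B `<=` [set b | forall a, A a -> S (a, b)]]).
    split => /=; first exact: open_nbhs_nbhs.
    exact: powerset_filter_fromP.
  case=> x' B /= [A1x' [_ BS]].
  apply: filterS (open_nbhs_nbhs (conj oA1 A1x')) => a' A1a' b Bb.
  by apply: BS => //; exact: A1A.
- move=> M [FM _ [B MB]] MP.
  have /set_nbhsP [D [oD QD DB]] := FM _ MB.
  have : set_nbhs P [set a' | forall b, B b -> S (a', b)] by move=> a Pa; exact: MP.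
  move=> /set_nbhsP [C [oC PC CS]].
  exists C, D; split => // a b Ca Db; apply: CS => //; exact: DB.
Qed.
End Tube.

Section OrderTop.
Context {X : topologicalType} (le : X -> X -> Prop) (cX : compord le).

Let cT : compact [set: X]. Proof. by case: cX. Qed.
Let hX : hausdorff_space X. Proof. by case: cX. Qed.
Let leT {x y z} : le x y -> le y z -> le x z. Proof. move=> a b; case: cX => _ _ [_ H _] _; exact: H a b. Qed.
Let leA {x y} : le x y -> le y x -> x = y. Proof. move=> a b; case: cX => _ _ [_ _ H] _; exact: H a b. Qed.

Lemma cl_compact (A : set X) : closed A -> compact A.
Proof. by move=> cA; exact: (subclosed_compact cA cT). Qed.

Lemma set1_closed (x : X) : closed [set x].
Proof. by apply: compact_closed; [exact: hX | exact: compact_set1]. Qed.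

Lemma compord_flip : compord (fun a b => le b a).
Proof.
split => //.
- case: cX => _ _ [? _ _] _; split => //.
    by move=> x y z a b; exact: leT b a.
  by move=> x y a b; exact: leA b a.
- have -> : [set p : X * X | le p.2 p.1] = (@swap X X) @^-1` [set p : X * X | le p.1 p.2].
    by apply/seteqP; split => -[a b].
  by apply: preimage_closed; [move=> p _; exact: swap_continuous | case: cX].
Qed.

Lemma snd_continuous : continuous (@snd X X).
Proof. by move=> [a b]; exact: cvg_snd. Qed.

Lemma upc_closed (A : set X) : closed A -> closed (upc le A).
Proof.
move=> cA.
have -> : upc le A = snd @` ((A `*` setT) `&` [set p : X * X | le p.1 p.2]).
  apply/seteqP; split.
    by move=> y [x Ax xy]; exists (x, y).
  by move=> _ [[x y] [[Ax _] /= xy] <-]; exists x.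
apply: (compact_closed hX); apply: continuous_compact.
  exact: continuous_subspaceT snd_continuous.
apply: compact_closedI; last by case: cX.
apply: compact_setX => //; exact: cl_compact.
Qed.
End OrderTop.

Lemma downc_closed {X : topologicalType} (le : X -> X -> Prop) (cX : compord le)
  (A : set X) : closed A -> closed (downc le A).
Proof. by move=> cA; have := @upc_closed X _ (compord_flip le cX) A cA. Qed.

Section Sep.
Context {X : topologicalType} (le : X -> X -> Prop) (cX : compord le).

Let cT : compact [set: X]. Proof. by case: cX. Qed.
Let leR : forall x, le x x. Proof. by case: cX => _ _ []. Qed.
Let leT {x y z} : le x y -> le y z -> le x z. Proof. move=> a b; case: cX => _ _ [_ H _] _; exact: H a b. Qed.
Let leA {x y} : le x y -> le y x -> x = y. Proof. move=> a b; case: cX => _ _ [_ _ H] _; exact: H a b. Qed.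
Let leC : closed [set p : X * X | le p.1 p.2]. Proof. by case: cX. Qed.

Lemma sep_up (K : set X) (y : X) : closed K -> ~ upc le K y ->
  exists U D, [/\ open U, is_upset le U, open D & is_downset le D] /\
    [/\ K `<=` U, D y & forall z, U z -> D z -> False].
Proof.
move=> cK nKy.
have PQ : upc le K `*` downc le [set y] `<=` ~` [set p : X * X | le p.1 p.2].
  case=> a b [[k Kk ka] [y' yy by']] ab; apply: nKy; exists k => //.
  rewrite -yy; exact: leT (leT ka ab) by'.
have [A [B [oA oB PA QB AB]]] := @tube X X (upc le K) (downc le [set y])
  (~` [set p : X * X | le p.1 p.2])
  (cl_compact le cX _ (upc_closed le cX K cK))
  (cl_compact le cX _ (downc_closed le cX _ (set1_closed le cX y)))
  (closed_openC leC) PQ.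
exists (~` downc le (~` A)), (~` upc le (~` B)); split; first split.
- exact/closed_openC/(downc_closed le cX _)/open_closedC.
- move=> a b Ua ab [w nAw bw]; apply: Ua; exists w => //; exact: leT ab bw.
- exact/closed_openC/(upc_closed le cX _)/open_closedC.
- move=> a b Da ba [w nBw wb]; apply: Da; exists w => //; exact: leT wb ba.
split.
- move=> k Kk [w nAw kw]; apply: nAw; apply: PA; exists k => //.
- move=> [w nBw wy]; apply: nBw; apply: QB; exists y => //.
- move=> z Uz Dz; have Az : A z by apply: contra_notP Uz => nAz; exists z.
  have Bz : B z by apply: contra_notP Dz => nBz; exists z.
  exact: (AB z z Az Bz (leR z)).
Qed.

Lemma minimal_below (L : set X) (x : X) : closed L -> L x ->
  exists m, [/\ L m, le m x & forall l, L l -> le l m -> l = m].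
Proof.
move=> cL Lx.
pose T0 := {m : X | L m /\ le m x}.
pose R0 := fun s t : T0 => `[< le (sval t) (sval s) >].
have [||||t tmax] := @Zorn T0 R0.
- by move=> s; apply/asboolP.
- by move=> r s t /asboolP rs /asboolP st; apply/asboolP; exact: leT st rs.
- move=> [s ps] [t pt] /asboolP /= st /asboolP /= ts; apply: eq_exist; exact: leA ts st.
- move=> A Atot.
  have [[a0 Aa0]|A0] := pselect (exists a, A a); last first.
    exists (exist _ x (conj Lx (leR x))) => s As; exfalso; apply: A0; by exists s.
  pose G := filter_from A (fun s : T0 => L `&` downc le [set sval s]).
  have FG : Filter G.
    apply: filter_from_filter; first by exists a0.
    move=> i j Ai Aj; have [/asboolP ji|/asboolP ij] := Atot _ _ Ai Aj.
    + exists j => //; move=> z [Lz [w wj zw]]; rewrite wj in zw.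
      split; split => //; first by exists (sval i) => //; exact: leT zw ji.
      by exists (sval j).
    + exists i => //; move=> z [Lz [w wi zw]]; rewrite wi in zw.
      split; split => //; first by exists (sval i).
      by exists (sval j) => //; exact: leT zw ij.
  have PG : ProperFilter G.
    apply: filter_from_proper => i Ai; exists (sval i); split; first by case: (svalP i).
    by exists (sval i).
  have [p [_ clp]] := cT G PG filterT.
  have Hp : forall s, A s -> L p /\ le p (sval s).
    move=> s As.
    have cls : closed (L `&` downc le [set sval s]).
      by apply: closedI => //; exact: (downc_closed le cX _ (set1_closed le cX _)).
    have : closure (L `&` downc le [set sval s]) p.
      by move: clp; rewrite clusterE; apply; exists s.
    rewrite -((closure_id _).1 cls) => -[Lp [w ws pw]]; split => //; by rewrite -ws.
  have [Lp pa0] := Hp a0 Aa0.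
  exists (exist _ p (conj Lp (leT pa0 (proj2 (svalP a0))))) => s As.
  by apply/asboolP; exact: (Hp s As).2.
- exists (sval t); split; [exact: (proj1 (svalP t)) | exact: (proj2 (svalP t)) |].
  move=> l Ll lt.
  have := tmax (exist _ l (conj Ll (leT lt (proj2 (svalP t))))).
  by move=> /(_ (introT (asboolP _) lt)) /(congr1 sval).
Qed.
End Sep.

Lemma sep_down {X : topologicalType} (le : X -> X -> Prop) (cX : compord le)
  (L : set X) (x : X) : closed L -> ~ downc le L x ->
  exists D U, [/\ open D, is_downset le D, open U & is_upset le U] /\
    [/\ L `<=` D, U x & forall z, D z -> U z -> False].
Proof. move=> cL nLx; exact: (@sep_up X _ (compord_flip le cX) L x cL nLx). Qed.

Lemma maximal_above {X : topologicalType} (le : X -> X -> Prop) (cX : compord le)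
  (L : set X) (x : X) : closed L -> L x ->
  exists m, [/\ L m, le x m & forall l, L l -> le m l -> l = m].
Proof. move=> cL Lx; exact: (@minimal_below X _ (compord_flip le cX) L x cL Lx). Qed.

Section VCtop.
Context {X : topologicalType} (le : X -> X -> Prop) (cX : compord le).
Local Notation FI := (finI_from (vc_subbase_index le) (vc_subbase le)).
Local Notation VCX := (VC X le).

Let leR : forall x, le x x. Proof. by case: cX => _ _ []. Qed.
Let leT {x y z} : le x y -> le y z -> le x z. Proof. move=> a b; case: cX => _ _ [_ H _] _; exact: H a b. Qed.
Let leA {x y} : le x y -> le y x -> x = y. Proof. move=> a b; case: cX => _ _ [_ _ H] _; exact: H a b. Qed.

Lemma vc_open_sub (A : set VCX) : open A ->
  forall K, A K -> exists2 B, FI B & B K /\ B `<=` A.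
Proof.
move=> [D' sD' <-] K [B D'B BK]; exists B; first exact: sD'.
by split => // L BL; exists B.
Qed.

Lemma vc_open_of (A : set VCX) :
  (forall K, A K -> exists2 B, FI B & B K /\ B `<=` A) -> open A.
Proof.
move=> H; exists [set B | FI B /\ B `<=` A]; first by move=> B [].
apply/seteqP; split; first by move=> K [B [_ BA] /BA].
by move=> K /H [B FB [BK BA]]; exists B.
Qed.

Lemma vc_subbase_open p : vc_subbase_index le p -> open (vc_subbase le p).
Proof.
move=> ip; apply: vc_open_of => K HK; exists (vc_subbase le p); last by split.
exact: finI_from1.
Qed.

Lemma vc_diamond_open (U : set X) : open U -> is_upset le U \/ is_downset le U ->
  open (vc_diamond le U).
Proof. by move=> oU uU; exact: (@vc_subbase_open (true, U)). Qed.

Lemma vc_box_open (U : set X) : open U -> is_upset le U \/ is_downset le U ->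
  open (vc_box le U).
Proof. by move=> oU uU; exact: (@vc_subbase_open (false, U)). Qed.

Lemma vc_cvg (F : set_system VCX) {FF : Filter F} (K : VCX) :
  (forall p, vc_subbase_index le p -> vc_subbase le p K -> F (vc_subbase le p)) ->
  F --> K.
Proof.
move=> H A; rewrite nbhsE => -[B [oB BK] BA].
have [C [s ss <-] [CK CB]] := @vc_open_sub _ oB K BK.
apply: (@filterS _ F _ _ _ BA); apply: (@filterS _ F _ _ _ CB); apply: filter_bigI => i si.
apply: H; first exact/set_mem/ss.
exact: CK.
Qed.

Lemma vc_setK (K : VCX) : updownc le (proj1_sig K) = proj1_sig K.
Proof.
case: K => K [cK convK] /=; apply/seteqP; split.
  by move=> x [[a Ka ax] [b Kb xb]]; exact: convK Ka Kb ax xb.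
by move=> x Kx; split; exists x => //; apply: leR.
Qed.

Lemma vc_le_refl (K : VCX) : vc_le le K K.
Proof. by split. Qed.

Lemma vc_le_po : is_partial_order (vc_le le).
Proof.
split.
- exact: vc_le_refl.
- by move=> K L M [KL1 KL2] [LM1 LM2]; split; [exact: subset_trans LM1 KL1|exact: subset_trans KL2 LM2].
- move=> K L [KL1 KL2] [LK1 LK2].
  have e : proj1_sig K = proj1_sig L.
    rewrite -vc_setK -[RHS]vc_setK /updownc.
    by congr (_ `&` _); apply/seteqP; split.
  case: K L e {KL1 KL2 LK1 LK2} => K pK [L pL] /= e; exact: eq_exist.
Qed.

End VCtop.

Section VCsep.
Context {X : topologicalType} (le : X -> X -> Prop) (cX : compord le).
Local Notation VCX := (VC X le).

Let leR : forall x, le x x. Proof. by case: cX => _ _ []. Qed.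
Let leT {x y z} : le x y -> le y z -> le x z. Proof. move=> a b; case: cX => _ _ [_ H _] _; exact: H a b. Qed.

Lemma vc_sep (K L : VCX) : ~ vc_le le K L ->
  exists A B, [/\ open A, open B, A K, B L &
    forall K' L', A K' -> B L' -> ~ vc_le le K' L'].
Proof.
move=> nKL.
have cK : closed (proj1_sig K) by case: (svalP K).
have cL : closed (proj1_sig L) by case: (svalP L).
have [s1|ns1] := pselect (proj1_sig L `<=` upc le (proj1_sig K)); last first.
  have [y /not_implyP [Ly nKy]] := (existsNP _).2 ns1.
  have [U [D [[oU uU oD dD] [KU Dy UD]]]] := sep_up le cX _ _ cK nKy.
  exists (vc_box le U), (vc_diamond le D); split.
  - by apply: vc_box_open => //; left.
  - by apply: vc_diamond_open => //; right.
  - exact: KU.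
  - by exists y.
  - move=> K' L' K'U [y' [L'y' Dy']] [H1 _].
    have [k K'k ky'] : upc le (proj1_sig K') y' by apply: H1; exists y'.
    exact: UD y' (uU _ _ (K'U _ K'k) ky') Dy'.
have [s2|ns2] := pselect (proj1_sig K `<=` downc le (proj1_sig L)); last first.
  have [x /not_implyP [Kx nLx]] := (existsNP _).2 ns2.
  have [D [U [[oD dD oU uU] [LD Ux DU]]]] := sep_down le cX _ _ cL nLx.
  exists (vc_diamond le U), (vc_box le D); split.
  - by apply: vc_diamond_open => //; left.
  - by apply: vc_box_open => //; right.
  - by exists x.
  - exact: LD.
  - move=> K' L' [x' [K'x' Ux']] L'D [_ H2].
    have [l L'l x'l] : downc le (proj1_sig L') x' by apply: H2; exists x'.
    exact: DU x' (dD _ _ (L'D _ L'l) x'l) Ux'.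
exfalso; apply: nKL; split.
- by move=> z [l Ll lz]; have [k Kk kl] := s1 _ Ll; exists k => //; exact: leT kl lz.
- by move=> z [k Kk zk]; have [l Ll kl] := s2 _ Kk; exists l => //; exact: leT zk kl.
Qed.

Lemma vc_le_closed : closed [set p : VCX * VCX | vc_le le p.1 p.2].
Proof.
rewrite -[X in closed X]setCK; apply: open_closedC.
rewrite openE => -[K L] /= nKL.
have [A [B [oA oB AK BL H]]] := vc_sep _ _ nKL.
exists (A, B); first by split; apply: open_nbhs_nbhs.
by case=> K' L' [/= AK' BL']; exact: H.
Qed.

Lemma vc_hausdorff : hausdorff_space VCX.
Proof.
rewrite open_hausdorff => K L KL.
have [nKL|nLK] : ~ vc_le le K L \/ ~ vc_le le L K.
  apply: contra_notP (negP KL) => /not_orP [/contra_notP H1 /contra_notP H2].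
  apply/eqP; case: (vc_le_po le cX) => _ _; apply; [exact: H1|exact: H2].
- have [A [B [oA oB AK BL H]]] := vc_sep _ _ nKL.
  exists (A, B); first by split; exact/mem_set.
  split => //; apply/eqP/seteqP; split => // Z [AM BM].
  by apply: (H Z Z AM BM); exact: vc_le_refl.
- have [A [B [oA oB AL BK H]]] := vc_sep _ _ nLK.
  exists (B, A); first by split; exact/mem_set.
  split => //; apply/eqP/seteqP; split => // Z [BM AM].
  by apply: (H Z Z AM BM); exact: vc_le_refl.
Qed.
End VCsep.

Section VCcompact.
Context {X : topologicalType} (le : X -> X -> Prop) (cX : compord le).
Local Notation VCX := (VC X le).

Let leT {x y z} : le x y -> le y z -> le x z. Proof. move=> a b; case: cX => _ _ [_ H _] _; exact: H a b. Qed.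

Lemma vc_compact : compact [set: VCX].
Proof.
rewrite compact_ultra => F FU _.
have FF : ProperFilter F by exact: ultra_proper.
pose L0 := [set x : X | forall W, open W -> W x -> F (vc_diamond le W)].
have cL0 : closed L0.
  rewrite -[L0]setCK; apply: open_closedC; rewrite openE => x /= nL0x.
  have [W /not_implyP [oW /not_implyP [Wx nFW]]] := (existsNP _).2 nL0x.
  apply: filterS (open_nbhs_nbhs (conj oW Wx)) => x' Wx' H; apply: nFW.
  exact: H W oW Wx'.
pose M := updownc le L0.
have cM : closed M.
  by apply: closedI; [exact: upc_closed | exact: downc_closed].
have convM : order_convex le M.
  move=> y1 x y2 [[a La ay1] _] [_ [b Lb y2b]] y1x xy2; split.
  - by exists a => //; exact: leT ay1 y1x.
  - by exists b => //; exact: leT xy2 y2b.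
pose K := exist (fun S => closed S /\ order_convex le S) M (conj cM convM) : VCX.
exists K; split => //; apply: vc_cvg => -[b U] [/= oU uU]; case: b => /=.
- case=> y [[[l Ll ly] [l' Ll' yl']] Uy].
  case: uU => uU.
  + by apply: Ll' => //; exact: uU yl'.
  + by apply: Ll => //; exact: uU ly.
- move=> MU.
  have [//|Fc] := in_ultra_setVsetC (vc_box le U) FU.
  exfalso.
  have cC : closed (~` U) by exact: open_closedC.
  have /compact_near_coveringP ncC := cl_compact le cX _ cC.
  have FC : F [set K : VCX | (~` U) `<=` (fun x => ~ proj1_sig K x)].
    apply: (ncC VCX F (fun (K : VCX) x => ~ proj1_sig K x) FF) => x nUx.
    have nL0x : ~ L0 x.
      by move=> L0x; apply: nUx; apply: MU; split; exists x => //; case: cX => _ _ [].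
    have [W /not_implyP [oW /not_implyP [Wx nFW]]] := (existsNP _).2 nL0x.
    have [//|FcW] := in_ultra_setVsetC (vc_diamond le W) FU.
    exists (W, ~` vc_diamond le W); first by split => //=; exact: open_nbhs_nbhs.
    case=> x' K' /= [Wx' nK'W] K'x'; apply: nK'W; by exists x'.
  have [K' [nK'U K'C]] := filter_ex (filterI Fc FC).
  have [x /not_implyP [K'x nUx]] := (existsNP _).2 nK'U.
  exact: K'C x nUx K'x.
Qed.
End VCcompact.

Lemma vc_compord {X : topologicalType} (le : X -> X -> Prop) (cX : compord le) :
  compord (vc_le le).
Proof.
split; [exact: vc_compact | exact: vc_hausdorff | exact: vc_le_po | exact: vc_le_closed].
Qed.

Section UpdownLemmas.
Context {T : Type} (le : T -> T -> Prop) (leR : forall x, le x x)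
  (leT : forall x y z, le x y -> le y z -> le x z).

Lemma sub_updownc (S : set T) : S `<=` updownc le S.
Proof. by move=> x Sx; split; exists x. Qed.

Lemma updownc_meet (S U : set T) : is_upset le U \/ is_downset le U ->
  (updownc le S `&` U !=set0) <-> (S `&` U !=set0).
Proof.
move=> uU; split; last by case=> x [Sx Ux]; exists x; split => //; exact: sub_updownc.
case=> y [[[a Sa ay] [b Sb yb]] Uy]; case: uU => uU.
- by exists b; split => //; exact: uU yb.
- by exists a; split => //; exact: uU ay.
Qed.

Lemma updownc_sub (S U : set T) : is_upset le U \/ is_downset le U ->
  (updownc le S `<=` U) <-> (S `<=` U).
Proof.
move=> uU; split; first by move=> H x /sub_updownc /H.
move=> SU y [[a Sa ay] [b Sb yb]]; case: uU => uU.
- exact: uU (SU _ Sa) ay.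
- exact: uU (SU _ Sb) yb.
Qed.

Lemma upc_updownc (S : set T) : upc le (updownc le S) = upc le S.
Proof.
apply/seteqP; split.
- by move=> z [w [[a Sa aw] _] wz]; exists a => //; exact: leT aw wz.
- by move=> z [a Sa az]; exists a => //; exact: sub_updownc.
Qed.

Lemma downc_updownc (S : set T) : downc le (updownc le S) = downc le S.
Proof.
apply/seteqP; split.
- by move=> z [w [_ [a Sa wa]] zw]; exists a => //; exact: leT zw wa.
- by move=> z [a Sa az]; exists a => //; exact: sub_updownc.
Qed.
End UpdownLemmas.

Section VCmap.
Context {X Y : topologicalType} (leX : X -> X -> Prop) (leY : Y -> Y -> Prop)
  (cX : compord leX) (cY : compord leY) (f : X -> Y)
  (hf : compord_hom leX leY f).

Let leRY : forall x, leY x x. Proof. by case: cY => _ _ []. Qed.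
Let leTY : forall x y z, leY x y -> leY y z -> leY x z. Proof. by case: cY => _ _ []. Qed.
Let leRX : forall x, leX x x. Proof. by case: cX => _ _ []. Qed.

Lemma vc_map_set (K : VC X leX) :
  proj1_sig (vc_map leX leY f K) = updownc leY (f @` proj1_sig K).
Proof.
rewrite /vc_map; case: pselect => // -[]; split.
- have cK : closed (proj1_sig K) by case: (svalP K).
  have cfK : closed (f @` proj1_sig K).
    apply: compact_closed; first by case: cY.
    apply: continuous_compact; first exact: continuous_subspaceT hf.1.
    exact: cl_compact cX _ cK.
  by apply: closedI; [exact: upc_closed | exact: downc_closed].
- move=> y1 x y2 [[a Sa ay1] _] [_ [b Sb y2b]] y1x xy2; split.
  + by exists a => //; exact: leTY ay1 y1x.
  + by exists b => //; exact: leTY xy2 y2b.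
Qed.

Lemma vc_map_mono (K L : VC X leX) : vc_le leX K L ->
  vc_le leY (vc_map leX leY f K) (vc_map leX leY f L).
Proof.
move=> [KL1 KL2]; rewrite /vc_le !vc_map_set !upc_updownc // ?downc_updownc //.
split.
- move=> z [_ [l Ll <-] flz].
  have [k Kk kl] : upc leX (proj1_sig K) l by apply: KL1; exists l.
  exists (f k); first by exists k.
  exact: leTY (hf.2 _ _ kl) flz.
- move=> z [_ [k Kk <-] zfk].
  have [l Ll kl] : downc leX (proj1_sig L) k by apply: KL2; exists k.
  exists (f l); first by exists l.
  exact: leTY zfk (hf.2 _ _ kl).
Qed.

Lemma vc_map_preimage (b : bool) (U : set Y) :
  is_upset leY U \/ is_downset leY U ->
  vc_map leX leY f @^-1` vc_subbase leY (b, U) = vc_subbase leX (b, f @^-1` U).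
Proof.
move=> uU; apply/seteqP; split => K /=; case: b => /=; rewrite /vc_subbase /vc_diamond /vc_box /= vc_map_set.
- move=> /(updownc_meet leY leRY _ _ uU) [_ [[x Kx <-] Ufx]]; by exists x.
- by move=> /(updownc_sub leY leRY _ _ uU) H x Kx; apply: H; exists x.
- move=> [x [Kx Ufx]]; apply/(updownc_meet leY leRY _ _ uU); exists (f x); split => //; by exists x.
- by move=> H; apply/(updownc_sub leY leRY _ _ uU) => _ [x Kx <-]; exact: H.
Qed.

Lemma vc_map_hom : compord_hom (vc_le leX) (vc_le leY) (vc_map leX leY f).
Proof.
split; last exact: vc_map_mono.
move=> K; have FF : Filter (vc_map leX leY f @ K) by apply: fmap_filter; apply: nbhs_filter.
apply: vc_cvg => -[b U] [/= oU uU] HK.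
rewrite /= -/(nbhs _ _) .
have -> : vc_map leX leY f @^-1` vc_subbase leY (b, U) = vc_subbase leX (b, f @^-1` U).
  exact: vc_map_preimage.
apply: open_nbhs_nbhs; split.
  apply: vc_subbase_open; split => /=.
    by move/continuousP : hf.1; apply.
  case: uU => uU; [left|right] => x y Ufx xy; exact: uU (hf.2 _ _ xy).
by rewrite -vc_map_preimage.
Qed.
End VCmap.

Lemma vc_ext {X : topologicalType} (le : X -> X -> Prop) (K L : VC X le) :
  proj1_sig K = proj1_sig L -> K = L.
Proof. by case: K L => K pK [L pL] /= e; exact: eq_exist. Qed.

Lemma updownc_mono {T : Type} (le : T -> T -> Prop) (S S' : set T) :
  S `<=` S' -> updownc le S `<=` updownc le S'.
Proof. by move=> SS' y [[a Sa ay] [b Sb yb]]; split; [exists a|exists b] => //; apply: SS'. Qed.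

Lemma vc_map_comp {A B C : topologicalType} (leA : A -> A -> Prop)
  (leB : B -> B -> Prop) (leC : C -> C -> Prop)
  (cA : compord leA) (cB : compord leB) (cC : compord leC)
  (p : A -> B) (q : B -> C) (hp : compord_hom leA leB p) (hq : compord_hom leB leC q)
  (K : VC A leA) :
  proj1_sig (vc_map leB leC q (vc_map leA leB p K)) = updownc leC ((q \o p) @` proj1_sig K).
Proof.
have leRC : forall x, leC x x by case: cC => _ _ [].
have leTC : forall x y z, leC x y -> leC y z -> leC x z by case: cC => _ _ [].
have leRB : forall x, leB x x by case: cB => _ _ [].
rewrite (vc_map_set leB leC cB cC q hq) (vc_map_set leA leB cA cB p hp).
apply/seteqP; split.
- have : q @` updownc leB (p @` proj1_sig K) `<=` updownc leC ((q \o p) @` proj1_sig K).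
    move=> _ [y [[_ [k1 Kk1 <-] k1y] [_ [k2 Kk2 <-] yk2]] <-]; split.
    + by exists (q (p k1)); [exists k1|exact: hq.2].
    + by exists (q (p k2)); [exists k2|exact: hq.2].
  move=> /(updownc_mono leC) H z /H [z1 z2]; split.
  + by rewrite -(upc_updownc leC leRC leTC); exact: z1.
  + by rewrite -(downc_updownc leC leRC leTC); exact: z2.
- apply: updownc_mono => _ [k Kk <-]; exists (p k) => //.
  by apply: sub_updownc => //; exists k.
Qed.

Section Equalizer.
Context {E X Y : topologicalType}
  (leE : E -> E -> Prop) (leX : X -> X -> Prop) (leY : Y -> Y -> Prop)
  (cE : compord leE) (cX : compord leX) (cY : compord leY)
  (f g : X -> Y) (k : Y -> X) (h : E -> X)
  (hf : compord_hom leX leY f) (hg : compord_hom leX leY g)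
  (hk : compord_hom leY leX k)
  (kf : k \o f = id) (kg : k \o g = id)
  (hh : compord_hom leE leX h)
  (hemb : forall a b, leX (h a) (h b) -> leE a b)
  (hEq : forall x, f x = g x -> exists e, h e = x)
  (fhgh : f \o h = g \o h).

Let leRX : forall x, leX x x. Proof. by case: cX => _ _ []. Qed.
Let leTX : forall x y z, leX x y -> leX y z -> leX x z. Proof. by case: cX => _ _ []. Qed.
Let leAY : forall x y, leY x y -> leY y x -> x = y. Proof. by case: cY => _ _ []. Qed.
Let leRY : forall x, leY x x. Proof. by case: cY => _ _ []. Qed.
Let leRE : forall x, leE x x. Proof. by case: cE => _ _ []. Qed.
Let leTE : forall x y z, leE x y -> leE y z -> leE x z. Proof. by case: cE => _ _ []. Qed.
Let kfx x : k (f x) = x. Proof. exact: (congr1 (fun F => F x) kf). Qed.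
Let kgx x : k (g x) = x. Proof. exact: (congr1 (fun F => F x) kg). Qed.

Definition eqv (L : VC X leX) := vc_map leX leY f L = vc_map leX leY g L.

Lemma eqv_sets (L : VC X leX) : eqv L ->
  updownc leY (f @` proj1_sig L) = updownc leY (g @` proj1_sig L).
Proof.
move=> e; rewrite -(vc_map_set leX leY cX cY f hf) -(vc_map_set leX leY cX cY g hg).
by rewrite e.
Qed.

Lemma eqv_between (L : VC X leX) : eqv L -> forall x, proj1_sig L x ->
  (exists2 e, proj1_sig L (h e) & leX (h e) x) /\
  (exists2 e, proj1_sig L (h e) & leX x (h e)).
Proof.
move=> /eqv_sets e x Lx.
have cL : closed (proj1_sig L) by case: (svalP L).
split.
- have [m [Lm mx mmin]] := minimal_below leX cX _ _ cL Lx.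
  have gmfm : leY (g m) (f m).
    have : updownc leY (g @` proj1_sig L) (f m).
      by rewrite -e; apply: sub_updownc => //; exists m.
    case=> -[_ [l Ll <-] glfm] _.
    have lm : leX l m by rewrite -(kgx l) -(kfx m); exact: hk.2.
    by rewrite (mmin l Ll lm) in glfm.
  have fmgm : leY (f m) (g m).
    have : updownc leY (f @` proj1_sig L) (g m).
      by rewrite e; apply: sub_updownc => //; exists m.
    case=> -[_ [l Ll <-] flgm] _.
    have lm : leX l m by rewrite -(kfx l) -(kgx m); exact: hk.2.
    by rewrite (mmin l Ll lm) in flgm.
  have [e0 he] := hEq _ (leAY _ _ fmgm gmfm).
  by exists e0; rewrite he.
- have [m [Lm xm mmax]] := maximal_above leX cX _ _ cL Lx.
  have gmfm : leY (f m) (g m).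
    have : updownc leY (g @` proj1_sig L) (f m).
      by rewrite -e; apply: sub_updownc => //; exists m.
    case=> _ [_ [l Ll <-] fmgl].
    have ml : leX m l by rewrite -(kgx l) -(kfx m); exact: hk.2.
    by rewrite (mmax l Ll ml) in fmgl.
  have fmgm : leY (g m) (f m).
    have : updownc leY (f @` proj1_sig L) (g m).
      by rewrite e; apply: sub_updownc => //; exists m.
    case=> _ [_ [l Ll <-] gmfl].
    have ml : leX m l by rewrite -(kfx l) -(kgx m); exact: hk.2.
    by rewrite (mmax l Ll ml) in gmfl.
  have [e0 he] := hEq _ (leAY _ _ gmfm fmgm).
  by exists e0; rewrite he.
Qed.

Lemma pre_prop (L : VC X leX) :
  closed (h @^-1` proj1_sig L) /\ order_convex leE (h @^-1` proj1_sig L).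
Proof.
case: (svalP L) => cL convL; split.
- by apply: preimage_closed => // x _; exact: hh.1.
- move=> e1 e e2 /= L1 L2 e1e ee2.
  exact: convL L1 L2 (hh.2 _ _ e1e) (hh.2 _ _ ee2).
Qed.

Definition pre_vc (L : VC X leX) : VC E leE := exist _ _ (pre_prop L).

Let vch_set (K : VC E leE) :
  proj1_sig (vc_map leE leX h K) = updownc leX (h @` proj1_sig K).
Proof. exact: (vc_map_set leE leX cE cX h hh). Qed.

Lemma pre_vch (K : VC E leE) : pre_vc (vc_map leE leX h K) = K.
Proof.
apply: vc_ext => /=; rewrite vch_set; apply/seteqP; split.
- move=> e [[_ [k1 K1 <-] h1] [_ [k2 K2 <-] h2]].
  by case: (svalP K) => _ convK; exact: convK K1 K2 (hemb _ _ h1) (hemb _ _ h2).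
- by move=> e Ke; apply: sub_updownc => //; exists e.
Qed.

Lemma vch_pre (L : VC X leX) : eqv L -> vc_map leE leX h (pre_vc L) = L.
Proof.
move=> eL; apply: vc_ext; rewrite vch_set /=; apply/seteqP; split.
- rewrite -[X in _ `<=` X](vc_setK leX cX L); apply: updownc_mono.
  by move=> _ [e Le <-].
- move=> x Lx; have [[e1 L1 e1x] [e2 L2 xe2]] := eqv_between _ eL _ Lx.
  by split; [exists (h e1) => //; exists e1 | exists (h e2) => //; exists e2].
Qed.

Lemma pre_mono (L L' : VC X leX) : eqv L -> eqv L' -> vc_le leX L L' ->
  vc_le leE (pre_vc L) (pre_vc L').
Proof.
move=> eL eL' [LL1 LL2]; split => /=.
- move=> e [e' L'e' e'e].
  have [l Ll le'] : upc leX (proj1_sig L) (h e') by apply: LL1; exists (h e').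
  have [[a La al] _] := eqv_between _ eL _ Ll.
  exists a => //; apply: leTE (hemb _ _ (leTX _ _ _ al le')) e'e.
- move=> e [e' Le' ee'].
  have [l L'l e'l] : downc leX (proj1_sig L') (h e') by apply: LL2; exists (h e').
  have [_ [b Lb lb]] := eqv_between _ eL' _ L'l.
  exists b => //; apply: leTE ee' (hemb _ _ (leTX _ _ _ e'l lb)).
Qed.

Lemma h_image_closed (C : set E) : closed C -> closed (h @` C).
Proof.
move=> cC; apply: compact_closed; first by case: cX.
apply: continuous_compact; first exact: continuous_subspaceT hh.1.
exact: cl_compact cE _ cC.
Qed.

Lemma open_pre (U : set E) : open U -> is_upset leE U \/ is_downset leE U ->
  exists U', [/\ open U', is_upset leX U' \/ is_downset leX U' & h @^-1` U' = U].
Proof.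
move=> oU [uU|dU].
- exists (~` downc leX (h @` ~` U)); split.
  + exact/closed_openC/(downc_closed leX cX)/h_image_closed/open_closedC.
  + left => x y nx xy [w [c nUc hcw] yw]; apply: nx; exists w; first by exists c.
    exact: leTX xy yw.
  + apply/seteqP; split => e /=.
    * move=> nd; apply: contra_notP nd => nUe; exists (h e) => //; by exists e.
    * move=> Ue [w [c nUc <-] ec]; apply: nUc; exact: uU Ue (hemb _ _ ec).
- exists (~` upc leX (h @` ~` U)); split.
  + exact/closed_openC/(upc_closed leX cX)/h_image_closed/open_closedC.
  + right => x y nx yx [w [c nUc hcw] wy]; apply: nx; exists w; first by exists c.
    exact: leTX wy yx.
  + apply/seteqP; split => e /=.
    * move=> nd; apply: contra_notP nd => nUe; exists (h e) => //; by exists e.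
    * move=> Ue [w [c nUc <-] ce]; apply: nUc; exact: dU Ue (hemb _ _ ce).
Qed.

Lemma pre_sub (L : VC X leX) (b : bool) (U' : set X) : eqv L ->
  is_upset leX U' \/ is_downset leX U' ->
  vc_subbase leE (b, h @^-1` U') (pre_vc L) <-> vc_subbase leX (b, U') L.
Proof.
move=> eL uU; case: b; rewrite /vc_subbase /vc_diamond /vc_box /=; split.
- by case=> e [Le Ue]; exists (h e).
- case=> x [Lx Ux]; have [[e1 L1 e1x] [e2 L2 xe2]] := eqv_between _ eL _ Lx.
  case: uU => uU; [exists e2 | exists e1]; split => //=.
  + exact: uU Ux xe2.
  + exact: uU Ux e1x.
- move=> H x Lx; have [[e1 L1 e1x] [e2 L2 xe2]] := eqv_between _ eL _ Lx.
  case: uU => uU; [exact: uU (H e1 L1) e1x | exact: uU (H e2 L2) xe2].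
- by move=> H e Le; exact: H.
Qed.

Lemma univ_part (Z : topologicalType) (leZ : Z -> Z -> Prop) (cZ : compord leZ)
  (u : Z -> VC X leX) (hu : compord_hom leZ (vc_le leX) u)
  (fu : vc_map leX leY f \o u = vc_map leX leY g \o u) :
  exists! v : Z -> VC E leE, compord_hom leZ (vc_le leE) v /\ vc_map leE leX h \o v = u.
Proof.
have eu z : eqv (u z) by exact: (congr1 (fun F => F z) fu).
exists (pre_vc \o u); split; first split; first split.
- move=> z; have FF : Filter ((pre_vc \o u) @ z) by apply: fmap_filter; apply: nbhs_filter.
  apply: vc_cvg => -[b U] [/= oU uU] HU.
  have [U' [oU' uU' eU]] := open_pre _ oU uU.
  rewrite -eU in HU *.
  have oS : open (u @^-1` vc_subbase leX (b, U')).
    by move/continuousP : hu.1; apply; apply: vc_subbase_open.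
  apply: filterS (open_nbhs_nbhs (conj oS _)).
    by move=> z' Hz'; apply/(pre_sub _ _ _ (eu z') uU').
  by apply/(pre_sub _ _ _ (eu z) uU').
- by move=> z z' zz'; apply: pre_mono => //; exact: hu.2.
- by apply: funext => z /=; exact: vch_pre.
- move=> w [_ hw]; apply: funext => z /=.
  by rewrite -hw /= pre_vch.
Qed.

End Equalizer.

Lemma pair_continuous {E X : topologicalType} (h : E -> X) :
  continuous h -> continuous (fun p : E * E => (h p.1, h p.2)).
Proof.
move=> hc [a b]; apply: cvg_pair.
- apply: cvg_comp; [exact: cvg_fst | exact: hc].
- apply: cvg_comp; [exact: cvg_snd | exact: hc].
Qed.


Theorem proposition3p23
  (E X Y : topologicalType)
  (leE : E -> E -> Prop) (leX : X -> X -> Prop) (leY : Y -> Y -> Prop)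
  (cE : compord leE) (cX : compord leX) (cY : compord leY)
  (f g : X -> Y) (k : Y -> X) (h : E -> X)
  (hf : compord_hom leX leY f) (hg : compord_hom leX leY g)
  (hk : compord_hom leY leX k)
  (kf : k \o f = id) (kg : k \o g = id)
  (heq : is_equalizer leE leX leY h f g) :
  is_equalizer (vc_le leE) (vc_le leX) (vc_le leY)
    (vc_map leE leX h) (vc_map leX leY f) (vc_map leX leY g).
Proof.
case: heq => _ [hh _] fhgh univ.
have leRX : forall x, leX x x by case: cX => _ _ [].
have leAX : forall x y, leX x y -> leX y x -> x = y by case: cX => _ _ [].
have leTX : forall x y z, leX x y -> leX y z -> leX x z by case: cX => _ _ [].
have leRE : forall x, leE x x by case: cE => _ _ [].
have fhx : forall a, f (h a) = g (h a) by move=> a; exact: (congr1 (fun F => F a) fhgh).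
have cst_hom : forall x : X, compord_hom leX leX (fun=> x).
  by move=> x; split; [exact: cst_continuous | move=> *; exact: leRX].
have cstE_hom : forall e : E, compord_hom leX leE (fun=> e).
  by move=> e; split; [exact: cst_continuous | move=> *; exact: leRE].
have hinj : forall a b, h a = h b -> a = b.
  move=> a b hab.
  have [v [_ uniq]] := univ X leX cX (fun=> h a) (cst_hom _)
    (funext (fun _ => fhx a)).
  have va := uniq (fun=> a) (conj (cstE_hom a) (erefl _)).
  have vb := uniq (fun=> b) (conj (cstE_hom b) (funext (fun _ => esym hab))).
  by have := congr1 (fun F => F (h a)) (etrans (esym va) vb).
have hEq : forall x, f x = g x -> exists e, h e = x.
  move=> x fgx.
  have [v [[_ hv] _]] := univ X leX cX (fun=> x) (cst_hom _) (funext (fun _ => fgx)).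
  by exists (v x); exact: (congr1 (fun F => F x) hv).
have hemb : forall a b, leX (h a) (h b) -> leE a b.
  pose leZ := fun a b => leX (h a) (h b).
  have cZ : compord leZ.
    case: cE => cTE hE _ _; case: cX => _ _ _ cle; split => //.
    - split => [x|x y z|x y] /=; rewrite /leZ.
      + exact: leRX.
      + exact: leTX.
      + by move=> xy yx; apply: hinj; exact: leAX.
    - have -> : [set p : E * E | leZ p.1 p.2] =
          (fun p : E * E => (h p.1, h p.2)) @^-1` [set p : X * X | leX p.1 p.2].
        by [].
      apply: preimage_closed; last exact: cle.
      move=> p _; exact: (pair_continuous h hh.1 p).
  have [v [[[_ vmono] hv] _]] := univ E leZ cZ h (conj hh.1 (fun _ _ H => H)) fhgh.
  have vid : forall z, v z = z.
    by move=> z; apply: hinj; exact: (congr1 (fun F => F z) hv).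
  by move=> a b hab; have := vmono a b hab; rewrite !vid.
split.
- by split; [|split]; apply: vc_compord.
- by split; [|split]; apply: vc_map_hom.
- apply: funext => K /=; apply: vc_ext.
  rewrite (vc_map_comp leE leX leY cE cX cY h f hh hf K).
  by rewrite (vc_map_comp leE leX leY cE cX cY h g hh hg K) fhgh.
- move=> Z leZ cZ u hu fu.
  exact: (univ_part leE leX leY cE cX cY f g k h hf hg hk kf kg hh hemb hEq Z leZ cZ u hu fu).
Qed.
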